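(* Let $W$ be a right-angled Coxeter group with simple generators $S$, and let $x_1,x_2,y_1,y_2\in W$ form a butterfly. If $q\in D_L(y_1)\cap D_L(y_2)$, then $q\in D_L(x_1)\cap D_L(x_2)$.
   Context: $W$ is right-angled: every two distinct simple generators either commute or generate an infinite dihedral group. $\ell$ is length, $D_L(x)=\{q\in S:\ell(qx)<\ell(x)\}$, $\le$ Bruhat order and $\lessdot$ its covers. Elements $x_1,x_2,y_1,y_2$ with $x_1\ne x_2$, $y_1\ne y_2$ form a butterfly if $x_a\lessdot y_b$ for all $a,b\in\{1,2\}$. *)

(* Defs.v *)
From Stdlib Require Import Relations.Relation_Operators.
From mathcomp Require Import all_boot.
Set Implicit Arguments. Unset Strict Implicit. Unset Printing Implicit Defensive.

(* A right-angled Coxeter system is given by a finite set S of simple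
   generators and a relation [c] on S: for s <> t, [c s t] means m(s,t) = 2
   (s and t commute); otherwise m(s,t) = infinity.  Elements of W are
   represented by words (seq S); two words represent the same element of W
   iff they are related by [wequiv c], the congruence generated by the
   defining relations s s = 1 and s t = t s (when c s t). *)
Section RACG.
Variables (S : finType) (c : rel S).

Inductive wstep : seq S -> seq S -> Prop :=
  | wstep_cancel (a b : seq S) (s : S) : wstep (a ++ [:: s; s] ++ b) (a ++ b)
  | wstep_comm (a b : seq S) (s t : S) :
      c s t -> wstep (a ++ [:: s; t] ++ b) (a ++ [:: t; s] ++ b).

Definition wequiv : seq S -> seq S -> Prop := clos_refl_sym_trans _ wstep.

Definition len_lt (u v : seq S) : Prop :=
  exists u', wequiv u u' /\ forall v', wequiv v v' -> size u' < size v'.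

Definition left_descent (q : S) (x : seq S) : Prop := len_lt (q :: x) x.

Definition reflection (t : seq S) : Prop :=
  exists (w : seq S) (s : S), wequiv t (w ++ s :: rev w).

Definition bstep (u v : seq S) : Prop :=
  exists t, reflection t /\ wequiv v (u ++ t) /\ len_lt u v.

Definition bruhat_lt : seq S -> seq S -> Prop := clos_trans _ bstep.
Definition bruhat_le (u v : seq S) : Prop := wequiv u v \/ bruhat_lt u v.
Definition bruhat_cover (u v : seq S) : Prop :=
  bruhat_lt u v /\ ~ (exists z, bruhat_lt u z /\ bruhat_lt z v).

Definition butterfly (x1 x2 y1 y2 : seq S) : Prop :=
  ~ wequiv x1 x2 /\ ~ wequiv y1 y2 /\
  bruhat_cover x1 y1 /\ bruhat_cover x1 y2 /\
  bruhat_cover x2 y1 /\ bruhat_cover x2 y2.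
End RACG.

(* Main.v *)
Require Import Defs.
From Stdlib Require Import Relations.Relation_Operators Relations.Operators_Properties.
From Stdlib Require Import Setoid Morphisms ClassicalEpsilon Classical.
From mathcomp Require Import all_boot zify.
Set Implicit Arguments. Unset Strict Implicit. Unset Printing Implicit Defensive.

Section RACGP.
Variables (S : finType) (c : rel S).
Local Notation E := (wequiv c).

Lemma E_refl a : E a a. Proof. exact: rst_refl. Qed.
Lemma E_sym a b : E a b -> E b a. Proof. exact: rst_sym. Qed.
Lemma E_trans a b d : E a b -> E b d -> E a d. Proof. exact: rst_trans. Qed.

Hint Resolve E_refl : core.

Instance E_equiv : Equivalence E.
Proof. split; [exact: E_refl | exact: E_sym | exact: E_trans]. Qed.

Lemma wstep_catl p a b : wstep c a b -> wstep c (p ++ a) (p ++ b).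
Proof.
case=> [x y s|x y s t cst]; rewrite catA.
  by rewrite [p ++ (x ++ y)]catA; apply: wstep_cancel.
by rewrite [p ++ (x ++ _)]catA; apply: wstep_comm.
Qed.

Lemma wstep_catr q a b : wstep c a b -> wstep c (a ++ q) (b ++ q).
Proof.
case=> [x y s|x y s t cst]; rewrite -!catA.
  by apply: wstep_cancel.
by apply: wstep_comm.
Qed.

Lemma E_catl p a b : E a b -> E (p ++ a) (p ++ b).
Proof.
elim=> [x y st|x|x y _ IH|x y z _ IH1 _ IH2].
- by apply: rst_step; apply: wstep_catl.
- exact: E_refl.
- exact: E_sym.
- exact: E_trans IH2.
Qed.

Lemma E_catr q a b : E a b -> E (a ++ q) (b ++ q).
Proof.
elim=> [x y st|x|x y _ IH|x y z _ IH1 _ IH2].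
- by apply: rst_step; apply: wstep_catr.
- exact: E_refl.
- exact: E_sym.
- exact: E_trans IH2.
Qed.

Instance cat_proper : Proper (E ==> E ==> E) (@cat S).
Proof. move=> a a' Ha b b' Hb; apply: (E_trans (E_catr _ Ha)); exact: E_catl. Qed.

Instance cons_proper s : Proper (E ==> E) (cons s).
Proof. move=> a a' Ha; exact: (E_catl [:: s] Ha). Qed.

Lemma E_ss s b : E (s :: s :: b) b.
Proof. by apply: rst_step; exact: (@wstep_cancel S c [::] b s). Qed.

Lemma E_comm s t b : c s t -> E (s :: t :: b) (t :: s :: b).
Proof. by move=> cst; apply: rst_step; exact: (@wstep_comm S c [::] b s t cst). Qed.

Lemma E_ssin p q s : E (p ++ s :: s :: q) (p ++ q).
Proof. apply: E_catl; exact: E_ss. Qed.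

Lemma E_commin p q s t : c s t -> E (p ++ s :: t :: q) (p ++ t :: s :: q).
Proof. by move=> h; apply: E_catl; exact: E_comm. Qed.

Lemma E_inv x : E (x ++ rev x) [::].
Proof.
elim: x => [|y x IH] //=.
rewrite rev_cons -cats1 catA.
rewrite IH /=. exact: E_ss.
Qed.

Lemma E_inv' x : E (rev x ++ x) [::].
Proof. have := E_inv (rev x); rewrite revK; exact. Qed.


Definition dec (P : Prop) : bool := if excluded_middle_informative P then true else false.
Lemma decP (P : Prop) : reflect P (dec P).
Proof. by rewrite /dec; case: excluded_middle_informative => h; constructor. Qed.
Lemma dec_iff (P Q : Prop) : (P <-> Q) -> dec P = dec Q.
Proof. by move=> [h1 h2]; apply/decP/decP. Qed.

Fixpoint nr (w t : seq S) : nat :=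
  if w is s :: w0 then dec (E [:: s] t) + nr w0 (s :: t ++ [:: s]) else 0.

Lemma nr_cat p m t : nr (p ++ m) t = nr p t + nr m (rev p ++ t ++ p).
Proof.
elim: p t => [|s p IH] t /=; first by rewrite cats0.
rewrite IH addnA rev_cons -cats1 -!catA /=. by rewrite -catA.
Qed.

Lemma conj_ss s a : E (s :: (s :: a ++ [:: s]) ++ [:: s]) a.
Proof.
have -> : s :: (s :: a ++ [:: s]) ++ [:: s] = s :: s :: (a ++ [:: s; s] ++ [::]).
  by rewrite cats0 /= -catA.
by rewrite E_ss (E_ssin a [::] s) cats0.
Qed.

Lemma conjE s a b : E a b <-> E (s :: a ++ [:: s]) (s :: b ++ [:: s]).
Proof.
split=> h; first by rewrite h.
by rewrite -(conj_ss s a) -(conj_ss s b) h.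
Qed.

Lemma nrE w t t' : E t t' -> nr w t = nr w t'.
Proof.
elim: w t t' => [|s w IH] t t' h //=.
congr (_ + _); first by congr nat_of_bool; apply: dec_iff; split=> h1; [rewrite -h | rewrite h].
by apply: IH; rewrite h.
Qed.

Lemma dec_conj s x T : E (s :: [:: x] ++ [:: s]) [:: x] ->
  dec (E [:: x] (s :: T ++ [:: s])) = dec (E [:: x] T).
Proof.
move=> hx; apply: dec_iff.
rewrite (conjE s [:: x] T) hx. by [].
Qed.

Lemma nr_step a b t : wstep c a b -> odd (nr a t) = odd (nr b t).
Proof.
case=> [p q s|p q s u csu]; rewrite !nr_cat; set T := (rev p ++ t ++ p).
  rewrite /= (@nrE q _ T); last by rewrite E_ss (E_ssin T [::] s) cats0.
  rewrite (@dec_conj s s); last by rewrite /= E_ss.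
  by rewrite addn0 !oddD addbb.
have -> : nr q (rev [:: s; u] ++ T ++ [:: s; u]) = nr q (rev [:: u; s] ++ T ++ [:: u; s]).
  apply: nrE; rewrite /= -(E_comm _ csu) (E_commin T [::] csu); done.
rewrite /= (@dec_conj s u); last by rewrite /= (E_comm _ csu) E_ss.
rewrite (@dec_conj u s); last by rewrite /= -(E_comm _ csu) E_ss.
by rewrite !addn0 [dec (E [:: u] T) + _]addnC.
Qed.

Lemma nr_E a b t : E a b -> odd (nr a t) = odd (nr b t).
Proof.
elim=> [x y st|x|x y _ IH|x y z _ IH1 _ IH2] //.
- exact: nr_step.
- by rewrite IH1.
Qed.


Lemma rev_pal (x : seq S) s : rev (x ++ s :: rev x) = x ++ s :: rev x.
Proof. by rewrite rev_cat rev_cons revK -cats1 -catA. Qed.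

Lemma pal_sq (x : seq S) s : E ((x ++ s :: rev x) ++ (x ++ s :: rev x)) [::].
Proof.
rewrite -!catA /= catA (E_inv' x) /=.
by rewrite (E_ssin x (rev x) s) E_inv.
Qed.

Lemma dec_conj' s x T : dec (E [:: x] (s :: T ++ [:: s])) = dec (E (s :: [:: x] ++ [:: s]) T).
Proof.
apply: dec_iff; rewrite (conjE s [:: x] (s :: T ++ [:: s])) conj_ss; done.
Qed.

Lemma nr_pal x s t : E t (x ++ s :: rev x) -> odd (nr (x ++ s :: rev x) t).
Proof.
elim: x s t => [|y x IH] s t ht /=.
  by rewrite addn0; case: decP => // []; rewrite ht.
set r0 := x ++ s :: rev x.
have hr : E t (y :: r0 ++ [:: y]).
  by rewrite ht /r0 /= rev_cons -cats1 -catA.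
have -> : x ++ s :: rev (y :: x) = r0 ++ [:: y] by rewrite rev_cons -cats1 /r0 -catA.
rewrite nr_cat rev_pal -/r0.
have h1 : E (y :: t ++ [:: y]) r0 by rewrite hr; exact: conj_ss.
have -> : nr [:: y] (r0 ++ (y :: t ++ [:: y]) ++ r0) = dec (E [:: y] r0).
  rewrite /= addn0; congr nat_of_bool; apply: dec_iff.
  have -> : y :: (t ++ [:: y]) ++ r0 = (y :: t ++ [:: y]) ++ r0 by [].
  rewrite h1 (catA r0 r0 r0) (pal_sq x s) /=; done.
have -> : dec (E [:: y] t) = dec (E [:: y] r0).
  apply: dec_iff; rewrite hr (conjE y [:: y] r0) /= E_ss; done.
rewrite !oddD (IH s _ h1).
by case: (dec _).
Qed.

Inductive Del : seq S -> seq S -> Prop :=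
  | Del0 s w : Del (s :: w) w
  | DelS s w w' : Del w w' -> Del (s :: w) (s :: w').

Lemma Del_size w w' : Del w w' -> size w = (size w').+1.
Proof. by elim=> //= s x x' _ ->. Qed.

Lemma D1 w t : 0 < nr w t -> exists w', Del w w' /\ E (t ++ w) w'.
Proof.
elim: w t => [|s w IH] t //=.
case: decP => [hs _|hs /= h].
  exists w; split; first exact: Del0.
  by rewrite -hs /= E_ss.
have [w' [d hw']] := IH _ h.
exists (s :: w'); split; first exact: DelS.
rewrite -hw'.
have -> : s :: (s :: t ++ [:: s]) ++ w = s :: s :: (t ++ s :: w) by rewrite /= -catA.
by rewrite E_ss.
Qed.


Definition lpred w : pred nat := fun n => dec (exists w', E w w' /\ size w' = n).
Lemma lex w : exists n, lpred w n.
Proof. by exists (size w); apply/decP; exists w. Qed.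
Definition l w := ex_minn (lex w).

Lemma l_spec w : exists w', E w w' /\ size w' = l w.
Proof. by rewrite /l; case: ex_minnP => n /decP. Qed.

Lemma l_min w w' : E w w' -> l w <= size w'.
Proof. by rewrite /l; case: ex_minnP => n _ H hw; apply: H; apply/decP; exists w'. Qed.

Lemma l_E w w' : E w w' -> l w = l w'.
Proof.
move=> h; apply/eqP; rewrite eqn_leq.
have [v [hv ev]] := l_spec w'; have [v' [hv' ev']] := l_spec w.
apply/andP; split.
  by rewrite -ev; apply: l_min; rewrite h.
by rewrite -ev'; apply: l_min; rewrite -h.
Qed.

Lemma E_odd a b : E a b -> odd (size a) = odd (size b).
Proof.
elim=> [x y st|x|x y _ IH|x y z _ IH1 _ IH2] //.
- by case: st => [p q s|p q s t _]; rewrite !size_cat /= ?addnS ?addSn ?oddS ?negbK.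
- by rewrite IH1.
Qed.

Lemma l_odd w : odd (l w) = odd (size w).
Proof. by have [v [hv <-]] := l_spec w; rewrite (E_odd hv). Qed.

Lemma l_cons s w : l (s :: w) <= (l w).+1.
Proof. have [v [hv <-]] := l_spec w; apply: (@l_min _ (s :: v)); by rewrite hv. Qed.

Lemma l_cons' s w : l w <= (l (s :: w)).+1.
Proof. by rewrite (l_E (E_sym (E_ss s w))) l_cons. Qed.

Lemma l_cons_ne s w : (l (s :: w) == l w) = false.
Proof.
apply/negP => /eqP h; have := l_odd (s :: w); rewrite h l_odd /=.
by case: (odd _).
Qed.

Lemma SE t w : reflection c t -> l (t ++ w) < l w ->
  exists w', Del w w' /\ E (t ++ w) w'.
Proof.
case=> x [s ht] hl; apply: D1.
case ho: (odd (nr w t)); first exact: odd_gt0.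
exfalso.
have [u [hu su]] := l_spec (t ++ w).
set r := x ++ s :: rev x.
have hw : E w (r ++ u).
  rewrite -hu catA ht (pal_sq x s) /=; done.
have hu1 : odd (nr u t).
  have := nr_E t hw; rewrite ho nr_cat rev_pal -/r oddD (nr_pal ht).
  have -> : nr u (r ++ t ++ r) = nr u t.
    apply: nrE; rewrite ht catA (pal_sq x s) /=; done.
  by case: (odd _).
have [u' [du hu']] := D1 (odd_gt0 hu1).
have hwu : E w u'.
  rewrite -hu' -hu catA ht (pal_sq x s) /=; done.
have := l_min hwu; have := Del_size du.
move: hl; rewrite -su => hl hs hle.
by move: (leq_trans hl hle); rewrite hs ltnNge leqnSn.
Qed.


Lemma len_ltP u v : len_lt c u v <-> l u < l v.
Proof.
split.
  case=> u' [hu H]; have [v' [hv <-]] := l_spec v.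
  exact: leq_ltn_trans (l_min hu) (H _ hv).
move=> h; have [u' [hu su]] := l_spec u; exists u'; split=> // v' hv.
by rewrite su; apply: leq_trans h (l_min hv).
Qed.

Definition bL u v := exists t, reflection c t /\ E v (t ++ u) /\ l u < l v.

Lemma bL_bstep u v : bL u v -> bstep c u v.
Proof.
case=> t [[x [s ht]] [hv hl]].
exists (rev u ++ t ++ u); split; last split; last exact/len_ltP.
  exists (rev u ++ x), s; rewrite ht rev_cat revK -!catA; done.
by rewrite hv catA (E_inv u).
Qed.

Lemma bstep_bL u v : bstep c u v -> bL u v.
Proof.
case=> t [[x [s ht]] [hv /len_ltP hl]].
exists (u ++ t ++ rev u); split; last split=> //.
  exists (u ++ x), s; rewrite ht rev_cat -!catA; done.
by rewrite hv -!catA (E_inv' u) cats0.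
Qed.

Lemma bstep_El u u' v : E u u' -> bstep c u v -> bstep c u' v.
Proof.
move=> h /bstep_bL [t [ht [hv hl]]]; apply: bL_bstep; exists t; split=> //.
by split; [rewrite -h | rewrite -(l_E h)].
Qed.

Lemma bstep_Er u v v' : E v v' -> bstep c u v -> bstep c u v'.
Proof.
move=> h /bstep_bL [t [ht [hv hl]]]; apply: bL_bstep; exists t; split=> //.
by split; [rewrite -h | rewrite -(l_E h)].
Qed.

Lemma lt_El u u' v : E u u' -> bruhat_lt c u v -> bruhat_lt c u' v.
Proof.
move=> h H; elim: H u' h => [x y st|x y z H1 IH H2 _] u' h.
  by apply: t_step; apply: bstep_El st.
exact: t_trans (IH _ h) H2.
Qed.

Lemma lt_Er u v v' : E v v' -> bruhat_lt c u v -> bruhat_lt c u v'.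
Proof.
move=> h H; elim: H v' h => [x y st|x y z H1 _ H2 IH] v' h.
  by apply: t_step; apply: bstep_Er st.
exact: t_trans H1 (IH _ h).
Qed.

Lemma le_lt u v w : bruhat_le c u v -> bruhat_lt c v w -> bruhat_lt c u w.
Proof. by case=> [h|h] h2; [apply: lt_El h2; symmetry | apply: t_trans h h2]. Qed.

Lemma lt_le u v w : bruhat_lt c u v -> bruhat_le c v w -> bruhat_lt c u w.
Proof. by move=> h1 [h|h]; [apply: lt_Er h h1 | apply: t_trans h1 h]. Qed.

Lemma bL_lt u v : bL u v -> bruhat_lt c u v.
Proof. by move=> h; apply: t_step; apply: bL_bstep. Qed.

Lemma refl_conj s t : reflection c t -> reflection c (s :: t ++ [:: s]).
Proof.
case=> x [s' ht]; exists (s :: x), s'; rewrite ht /= rev_cons -cats1 -!catA; done.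
Qed.

Lemma refl1 s : reflection c [:: s].
Proof. by exists [::], s. Qed.

Lemma bL_cons s u v : bL u v -> l (s :: u) < l (s :: v) -> bL (s :: u) (s :: v).
Proof.
case=> t [ht [hv hl]] h; exists (s :: t ++ [:: s]); split; first exact: refl_conj.
split=> //; rewrite hv.
have -> : (s :: t ++ [:: s]) ++ s :: u = s :: t ++ s :: s :: u by rewrite /= -catA.
by rewrite (E_ssin t u s).
Qed.

Lemma bL_desc s v : l (s :: v) < l v -> bL (s :: v) v.
Proof. by move=> h; exists [:: s]; split; [exact: refl1 | split=> //; rewrite /= E_ss]. Qed.

Lemma core s u v : bL u v -> l u < l (s :: u) -> l (s :: v) < l v ->
  bruhat_le c (s :: u) v.
Proof.
move=> huv hu hv.
case: (ltnP (l (s :: u)) (l (s :: v))) => h.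
  right; exact: t_trans (bL_lt (bL_cons huv h)) (bL_lt (bL_desc hv)).
case: huv => t [ht [Ev luv]].
have su : l (s :: u) = (l u).+1.
  by apply/eqP; rewrite eqn_leq l_cons.
have sv : l v = (l (s :: v)).+1.
  by apply/eqP; rewrite eqn_leq l_cons'.
have par : odd (l v) = ~~ odd (l u).
  case: ht => x [s' ht].
  rewrite (l_E Ev) !l_odd (E_odd (E_catr u ht)) !size_cat /= size_rev.
  by rewrite addnS addSn oddS oddD addnn odd_double.
have luv1 : l v = (l u).+1.
  move: par luv h; rewrite su sv; move: (l (s :: v)) (l u) => a b.
  rewrite [odd a.+1]/= => par h1 h2.
  have : a = b \/ a = b.+1 by lia.
  case=> [-> //|e]; exfalso; move: par; rewrite e /=.
  by case: (odd b).
have [z [hz sz]] := l_spec (s :: v).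
have Evz : E v (s :: z) by rewrite -hz /= E_ss.
have tt : E (t ++ t) [::] by case: ht => x [s' ->]; exact: pal_sq.
have Eu : E u (t ++ v) by rewrite Ev catA tt.
have e1 : l (t ++ s :: z) = l u by apply: l_E; rewrite -Evz Eu.
have e2 : l (s :: z) = l v by apply: l_E; rewrite -Evz.
have hl : l (t ++ s :: z) < l (s :: z) by rewrite e1 e2.
have [w' [dw hw']] := SE ht hl.
inversion dw as [s0 z0 e0 e1'|s0 z0 z' dz e0 e1']; subst.
  by left; rewrite Eu Evz hw'.
exfalso.
have E2 : E (s :: u) z' by rewrite Eu Evz hw' E_ss.
have := l_min E2; have := Del_size dz.
lia.
Qed.



Lemma lift s u w : bruhat_lt c u w -> l u < l (s :: u) -> l (s :: w) < l w ->
  bruhat_le c (s :: u) w.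
Proof.
move=> H0; have H := @clos_trans_t1n _ _ _ _ H0; clear H0.
elim: H => [x y st | x y z st H1 IH] hu hw.
  exact: core (bstep_bL st) hu hw.
have H1' : bruhat_lt c y z by apply: clos_t1n_trans.
case: (ltnP (l (s :: y)) (l y)) => hy.
  by right; apply: le_lt (core (bstep_bL st) hu hy) H1'.
have hy' : l y < l (s :: y) by rewrite ltn_neqAle eq_sym l_cons_ne.
right; apply: lt_le _ (IH hy' hw).
apply: bL_lt; apply: bL_cons (bstep_bL st) _.
have := l_cons s x; case: (bstep_bL st) => t [_ [_ hl]].
lia.
Qed.

End RACGP.

Theorem lemma7p8 (S : finType) (c : rel S)
  (c_irr : forall s, ~~ c s s) (c_sym : forall s t, c s t = c t s)
  (x1 x2 y1 y2 : seq S) (q : S) :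
  butterfly c x1 x2 y1 y2 ->
  left_descent c q y1 -> left_descent c q y2 ->
  left_descent c q x1 /\ left_descent c q x2.
Proof.
move=> [n12 [m12 [c11 [c12 [c21 c22]]]]] /len_ltP d1 /len_ltP d2.
have key : forall x, bruhat_cover c x y1 -> bruhat_cover c x y2 -> left_descent c q x.
  move=> x [lx1 nx1] [lx2 nx2]; apply/len_ltP.
  case: (ltnP (l c (q :: x)) (l c x)) => // h.
  have h' : l c x < l c (q :: x) by rewrite ltn_neqAle eq_sym l_cons_ne.
  have bx : bruhat_lt c x (q :: x).
    apply: bL_lt; exists [:: q]; split; first exact: refl1.
    by split; first exact: E_refl.
  have e1 : wequiv c (q :: x) y1.
    case: (lift lx1 h' d1) => // hlt.
    by exfalso; apply: nx1; exists (q :: x).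
  have e2 : wequiv c (q :: x) y2.
    case: (lift lx2 h' d2) => // hlt.
    by exfalso; apply: nx2; exists (q :: x).
  by exfalso; apply: m12; apply: E_trans (E_sym e1) e2.
by split; apply: key.
Qed.
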